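(* Consider a sequence of designs indexed by $n$ as in the context, and let $\hat\mu_n\in\mathbb{R}^k$ be a moment-type estimator, i.e. there are fixed integers $l_1\ge 1$, $l_2\ge 0$ and, for each $n$, nonrandom vectors $\phi^1,\dots,\phi^{l_1+l_2}\in\mathbb{R}^{kn}$ and a known map $F=F_n:\mathbb{R}^{l_1+l_2}\to\mathbb{R}^k$ such that: (i) $\hat\mu_n=F(\hat m_n^1,\dots,\hat m_n^{l_1},m_n^{l_1+1},\dots,m_n^{l_1+l_2})$, where $\hat m_n^s=\frac1n 1_{kn}'\pi^{-1}\mathbf{R}\phi^s$ for $s\le l_1$ and $m_n^s=\frac1n 1_{kn}'\phi^s$ for all $s$; (ii) (uniform local Lipschitz property) there exist $N$, $C>0$, $\epsilon>0$ such that for all $n\ge N$ and all $(\tilde m^1,\dots,\tilde m^{l_1})$ with $\sum_{s=1}^{l_1}(\tilde m^s-m_n^s)^2<\epsilon$, $\|F(\tilde m^1,\dots,\tilde m^{l_1},m_n^{l_1+1},\dots,m_n^{l_1+l_2})-F(m_n^1,\dots,m_n^{l_1+l_2})\|_2\le C\sqrt{\sum_{s=1}^{l_1}(\tilde m^s-m_n^s)^2}$; (iii) there is $C'$ with $\frac1n\|\phi^s\|_2^2\le C'$ for all $s$ and all $n$. Let $\mu_n:=F(m_n^1,\dots,m_n^{l_1+l_2})$. If $|||\mathbf{D}|||_2/n\to 0$, then $$\hat\mu_n-\mu_n=O_p\Big(\sqrt{|||\mathbf{D}|||_2/n}\Big).$$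
   Context: Setup: there are $k$ treatment arms and $n$ units; $k$ is fixed while $n\to\infty$ along a sequence of finite populations, each with its own randomized design. All probabilities, expectations, variances, $O_p$ and $o_p$ refer only to the randomness of the treatment assignment (potential outcomes, covariates and all vectors called nonrandom are fixed). For unit $i$ and arm $a$, $\mathbf{R}_{ai}\in\{0,1\}$ indicates that unit $i$ is assigned to arm $a$; each unit is assigned to exactly one arm. $\mathbf{R}$ denotes the $kn\times kn$ diagonal matrix with diagonal $(\mathbf{R}_{11},\dots,\mathbf{R}_{1n},\mathbf{R}_{21},\dots,\mathbf{R}_{kn})$, and $\pi=\mathrm{E}[\mathbf{R}]$ is the diagonal matrix of assignment probabilities $\pi_{ai}$, assumed to lie in $(0,1)$. $1_{kn}$ is the all-ones vector in $\mathbb{R}^{kn}$. The first-order design matrix is $\mathbf{D}=\mathrm{Var}(\pi^{-1}\mathbf{R}1_{kn})\in\mathbb{R}^{kn\times kn}$, the covariance matrix of the vector with entries $\mathbf{R}_{ai}/\pi_{ai}$. $|||A|||_2$ denotes the spectral norm (largest singular value, equal to the largest eigenvalue for positive semidefinite $A$). *)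

(* Defs.v *)
From HB Require Import structures.
From mathcomp Require Import all_boot all_order all_algebra.
From mathcomp Require Import boolp classical_sets reals topology normedtype sequences.
Set Implicit Arguments. Unset Strict Implicit. Unset Printing Implicit Defensive.
Import Order.TTheory GRing.Theory Num.Theory.
Local Open Scope ring_scope.

Section Design.
Variables (R : realType) (k n : nat).

(* An assignment: each unit i : 'I_n goes to exactly one arm z i : 'I_k. *)
Definition asg := {ffun 'I_n -> 'I_k}.

Definition is_design (P : asg -> R) : Prop :=
  (forall z, 0 <= P z) /\ \sum_(z : asg) P z = 1.

Definition Rind (a : 'I_k) (i : 'I_n) (z : asg) : R := (z i == a)%:R.
Definition Ex (P : asg -> R) (f : asg -> R) : R := \sum_(z : asg) P z * f z.
Definition Pr (P : asg -> R) (A : pred asg) : R := \sum_(z : asg | A z) P z.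

Definition aprob (P : asg -> R) (a : 'I_k) (i : 'I_n) : R := Ex P (Rind a i).

(* entry R_{ai}/pi_{ai} of pi^{-1} R 1_{kn}; index (a,i) of R^{kn} *)
Definition Rw (P : asg -> R) (p : 'I_k * 'I_n) (z : asg) : R :=
  Rind p.1 p.2 z / aprob P p.1 p.2.

(* D = Var(pi^{-1} R 1_{kn}) : covariance matrix *)
Definition Dmat (P : asg -> R) (p q : 'I_k * 'I_n) : R :=
  Ex P (fun z => Rw P p z * Rw P q z) - Ex P (Rw P p) * Ex P (Rw P q).

Definition mhat (P : asg -> R) (phi : 'I_k * 'I_n -> R) (z : asg) : R :=
  n%:R^-1 * \sum_(p : 'I_k * 'I_n) Rw P p z * phi p.
Definition mbar (phi : 'I_k * 'I_n -> R) : R :=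
  n%:R^-1 * \sum_(p : 'I_k * 'I_n) phi p.
End Design.

Definition vnorm (R : realType) (T : finType) (x : T -> R) : R :=
  Num.sqrt (\sum_(t : T) x t ^+ 2).
Definition rnorm (R : realType) (m : nat) (v : 'rV[R]_m) : R :=
  vnorm (fun j : 'I_m => v 0 j).

Definition specnorm (R : realType) (T : finType) (A : T -> T -> R) : R :=
  sup [set vnorm (fun t => \sum_(u : T) A t u * x u) | x in
       [set x : T -> R | vnorm x <= 1]].

Section Estimator.
Variables (R : realType) (k l1 l2 n : nat).
Variable (P : asg k n -> R).
Variable (phi : 'I_(l1 + l2) -> 'I_k * 'I_n -> R).

Definition mvec : 'rV[R]_(l1 + l2) := \row_s mbar (phi s).
Definition mhatvec (z : asg k n) : 'rV[R]_(l1 + l2) :=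
  \row_s (if (s < l1)%N then mhat P (phi s) z else mbar (phi s)).
End Estimator.

Definition bigOp (R : realType) (k : nat) (P : forall n, asg k n -> R)
  (X : forall n, asg k n -> R) (a : nat -> R) : Prop :=
  forall eps : R, 0 < eps -> exists M : R, exists N : nat,
    forall n, (N <= n)%N -> Pr (P n) (fun z => M * a n < X n z) < eps.

(* Main.v *)
Require Import Defs.
From HB Require Import structures.
From mathcomp Require Import all_boot all_order all_algebra.
From mathcomp Require Import boolp classical_sets reals topology normedtype sequences.
From mathcomp Require Import ring lra.
Import Order.TTheory GRing.Theory Num.Theory.
Import numFieldNormedType.Exports.
Local Open Scope classical_set_scope.
Local Open Scope ring_scope.

Lemma cs (R : realType) (T : finType) (a b : T -> R) :
  (\sum_t a t * b t) ^+ 2 <= (\sum_t a t ^+ 2) * (\sum_t b t ^+ 2).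
Proof.
have E1 : \sum_i \sum_j (a i * b j) ^+ 2 = (\sum_t a t ^+ 2) * (\sum_t b t ^+ 2).
  rewrite mulr_suml; apply: eq_bigr => i _; rewrite mulr_sumr.
  by apply: eq_bigr => j _; rewrite exprMn.
have E2 : \sum_i \sum_j (a j * b i) ^+ 2 = (\sum_t a t ^+ 2) * (\sum_t b t ^+ 2).
  rewrite exchange_big /=; rewrite mulr_suml; apply: eq_bigr => i _; rewrite mulr_sumr.
  by apply: eq_bigr => j _; rewrite exprMn.
have E3 : \sum_i \sum_j ((a i * b j) * (a j * b i)) = (\sum_t a t * b t) ^+ 2.
  rewrite expr2 mulr_suml; apply: eq_bigr => i _; rewrite mulr_sumr.
  by apply: eq_bigr => j _; ring.
have H : 0 <= \sum_i \sum_j (a i * b j - a j * b i) ^+ 2.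
  by apply: sumr_ge0 => i _; apply: sumr_ge0 => j _; apply: sqr_ge0.
have E4 : \sum_i \sum_j (a i * b j - a j * b i) ^+ 2 =
   \sum_i \sum_j (a i * b j) ^+ 2 + \sum_i \sum_j (a j * b i) ^+ 2
   - 2 * \sum_i \sum_j ((a i * b j) * (a j * b i)).
  rewrite mulr_sumr -big_split -sumrB /=; apply: eq_bigr => i _.
  rewrite mulr_sumr -big_split -sumrB /=; apply: eq_bigr => j _.
  ring.
move: H; rewrite E4 E1 E2 E3 => H.
lra.
Qed.

Lemma sq_le_sum (R : realType) (T : finType) (x : T -> R) u :
  x u ^+ 2 <= \sum_t x t ^+ 2.
Proof.
rewrite (bigD1 u) //= lerDl; apply: sumr_ge0 => t _; exact: sqr_ge0.
Qed.

Lemma vnorm_le1 (R : realType) (T : finType) (x : T -> R) :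
  vnorm x <= 1 -> \sum_t x t ^+ 2 <= 1.
Proof.
rewrite /vnorm -{1}sqrtr1 ler_sqrt //.
Qed.

Lemma spec_ub (R : realType) (T : finType) (A : T -> T -> R) (x : T -> R) :
  vnorm x <= 1 -> vnorm (fun t => \sum_u A t u * x u) <= specnorm A.
Proof.
move=> hx; rewrite /specnorm; apply: ub_le_sup; last by exists x.
exists (Num.sqrt (\sum_t (\sum_u `|A t u|) ^+ 2)) => _ [y hy <-].
have hy1 := @vnorm_le1 R T y hy.
rewrite /vnorm ler_sqrt; last by apply: sumr_ge0 => t _; apply: sqr_ge0.
apply: ler_sum => t _.
have hb : `|\sum_u A t u * y u| <= \sum_u `|A t u|.
  apply: le_trans (ler_norm_sum _ _ _) _; apply: ler_sum => u _.
  rewrite normrM; apply: ler_piMr => //.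
  have := le_trans (@sq_le_sum R T y u) hy1 => h.
  rewrite ler_norml; apply/andP; split; nra.
move: hb; rewrite ler_norml => /andP [h1 h2]; nra.
Qed.

Lemma cs_sqrt (R : realType) (T : finType) (a b : T -> R) :
  \sum_t a t * b t <= vnorm a * vnorm b.
Proof.
apply: le_trans (ler_norm _) _.
rewrite -sqrtr_sqr /vnorm -sqrtrM; last by apply: sumr_ge0 => t _; apply: sqr_ge0.
rewrite ler_sqrt; first exact: cs.
by apply: mulr_ge0; apply: sumr_ge0 => t _; apply: sqr_ge0.
Qed.

Lemma quad (R : realType) (T : finType) (A : T -> T -> R) (f : T -> R) :
  \sum_p f p * (\sum_q A p q * f q) <= specnorm A * \sum_t f t ^+ 2.
Proof.
have s0 : 0 <= \sum_t f t ^+ 2 by apply: sumr_ge0 => t _; apply: sqr_ge0.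
have [sz|snz] := eqVneq (\sum_t f t ^+ 2) 0.
  have f0 : forall t, f t = 0.
    move=> t; apply/eqP; rewrite -sqrf_eq0; apply/eqP.
    exact: (psumr_eq0P (fun t _ => sqr_ge0 (f t)) sz).
  rewrite sz mulr0 big1 // => p _; by rewrite f0 mul0r.
have sp : 0 < \sum_t f t ^+ 2 by rewrite lt_def snz s0.
set s := \sum_t f t ^+ 2 in s0 sp snz *.
set nu := Num.sqrt s.
have nup : 0 < nu by rewrite sqrtr_gt0.
have nu2 : nu ^+ 2 = s by rewrite sqr_sqrtr.
have nunz : nu != 0 by rewrite gt_eqF.
pose u := fun t => f t / nu.
have vu : vnorm u = 1.
  rewrite /vnorm; suff -> : \sum_t u t ^+ 2 = 1 by rewrite sqrtr1.
  rewrite /u; under eq_bigr => t _ do rewrite expr_div_n.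
  by rewrite -mulr_suml -/s -nu2 divff // expf_neq0.
have key : \sum_p u p * (\sum_q A p q * u q) <= specnorm A.
  apply: le_trans (@cs_sqrt R T u (fun p => \sum_q A p q * u q)) _.
  by rewrite vu mul1r; apply: (@spec_ub R T A u); rewrite vu.
have eq : \sum_p f p * (\sum_q A p q * f q) =
          nu ^+ 2 * \sum_p u p * (\sum_q A p q * u q).
  rewrite mulr_sumr; apply: eq_bigr => p _.
  have -> : \sum_q A p q * u q = (\sum_q A p q * f q) / nu.
    by rewrite mulr_suml; apply: eq_bigr => q _; rewrite /u mulrA.
  rewrite /u; field; exact: nunz.
rewrite eq nu2 mulrC; apply: ler_wpM2r => //.
Qed.

Section Ex.
Variables (R : realType) (k n : nat) (P : asg k n -> R).
Hypothesis hP : is_design P.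
Hypothesis hpi : forall a i, 0 < aprob P a i.

Lemma Ex_Rw p : Ex P (Rw P p) = 1.
Proof.
rewrite /Ex /Rw.
under eq_bigr => z _ do rewrite mulrA.
rewrite -mulr_suml divff //; exact: lt0r_neq0 (hpi _ _).
Qed.

Lemma dev_eq (phi : 'I_k * 'I_n -> R) z :
  mhat P phi z - mbar phi = n%:R^-1 * \sum_p (Rw P p z - 1) * phi p.
Proof.
rewrite /mhat /mbar -mulrBr; congr (_ * _).
rewrite -sumrB; apply: eq_bigr => p _; ring.
Qed.

Lemma Ex_cov p q :
  Ex P (fun z => (Rw P p z - 1) * (Rw P q z - 1)) = Dmat P p q.
Proof.
rewrite /Dmat !Ex_Rw mulr1 /Ex.
have h : forall z, P z * ((Rw P p z - 1) * (Rw P q z - 1)) =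
  P z * (Rw P p z * Rw P q z) - P z * Rw P p z - P z * Rw P q z + P z.
  move=> z; ring.
under eq_bigr => z _ do rewrite h.
rewrite big_split /= !sumrB.
have := Ex_Rw p; have := Ex_Rw q; rewrite /Ex => -> ->.
case: hP => _ ->; ring.
Qed.

Lemma Ex_sq (phi : 'I_k * 'I_n -> R) :
  Ex P (fun z => (mhat P phi z - mbar phi) ^+ 2) =
  n%:R^-1 ^+ 2 * \sum_p phi p * (\sum_q Dmat P p q * phi q).
Proof.
rewrite /Ex.
transitivity (n%:R^-1 ^+ 2 * \sum_z \sum_p \sum_q
   P z * ((Rw P p z - 1) * phi p) * ((Rw P q z - 1) * phi q)).
  rewrite mulr_sumr; apply: eq_bigr => z _.
  rewrite dev_eq exprMn expr2 mulrCA; congr (_ * _).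
  rewrite [X in P z * X]mulr_suml mulr_sumr; apply: eq_bigr => p _.
  rewrite mulr_sumr mulr_sumr; apply: eq_bigr => q _; ring.
congr (_ * _); rewrite exchange_big /=; apply: eq_bigr => p _.
rewrite exchange_big /= mulr_sumr; apply: eq_bigr => q _.
rewrite -Ex_cov /Ex mulr_suml mulr_sumr; apply: eq_bigr => z _; ring.
Qed.
End Ex.

Lemma markov (R : realType) (k n : nat) (P : asg k n -> R) (f : asg k n -> R) (c K : R) :
  is_design P -> (forall z, 0 <= f z) -> 0 <= c -> 0 <= K ->
  Ex P f <= K * c -> Pr P (fun z => c < f z) <= K.
Proof.
move=> [P0 P1] f0 c0 K0 hE.
have hsplit : Ex P f = \sum_(z | c < f z) P z * f z + \sum_(z | ~~ (c < f z)) P z * f z.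
  by rewrite /Ex (bigID (fun z => c < f z)).
have hrest : 0 <= \sum_(z | ~~ (c < f z)) P z * f z.
  by apply: sumr_ge0 => z _; apply: mulr_ge0.
have h1 : Pr P (fun z => c < f z) * c <= Ex P f.
  rewrite hsplit /Pr mulr_suml.
  have hA : \sum_(z | c < f z) P z * c <= \sum_(z | c < f z) P z * f z.
    by apply: ler_sum => z hz; apply: ler_wpM2l => //; apply: ltW.
  lra.
have [cp|] := ltP 0 c.
  by rewrite -(ler_pM2r cp); apply: le_trans h1 hE.
move=> cle; have c00 : c = 0 by apply/le_anti; rewrite cle c0.
move: hE h1; rewrite c00 mulr0 => hE _.
have hz : forall z, P z * f z = 0.
  move=> z; apply: (@psumr_eq0P _ _ xpredT (fun z => P z * f z)) => //.
    by move=> y _; apply: mulr_ge0.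
  by apply/le_anti; rewrite hE /=; apply: sumr_ge0 => y _; apply: mulr_ge0.
rewrite /Pr big1 // => z hfz.
by move: (hz z) => /eqP; rewrite mulf_eq0 (gt_eqF hfz) orbF => /eqP.
Qed.

Lemma Pr_mono (R : realType) (k n : nat) (P : asg k n -> R) (A B : pred (asg k n)) :
  (forall z, 0 <= P z) -> (forall z, A z -> B z) -> Pr P A <= Pr P B.
Proof.
move=> P0 hAB; rewrite /Pr [X in X <= _]big_mkcond [X in _ <= X]big_mkcond /=.
apply: ler_sum => z _.
case hA: (A z); first by rewrite (hAB _ hA).
by case: (B z).
Qed.

Lemma Ex_sum (R : realType) (k n : nat) (P : asg k n -> R) (I : finType) (Q : pred I)
  (g : I -> asg k n -> R) :
  Ex P (fun z => \sum_(s | Q s) g s z) = \sum_(s | Q s) Ex P (g s).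
Proof.
rewrite /Ex; under eq_bigr => z _ do rewrite mulr_sumr.
exact: exchange_big.
Qed.

Lemma specnorm_ge0 (R : realType) (T : finType) (A : T -> T -> R) : 0 <= specnorm A.
Proof.
apply: le_trans (@spec_ub R T A (fun _ => 0) _).
  by apply: sqrtr_ge0.
rewrite /vnorm big1 ?sqrtr0 // => t _; by rewrite expr0n.
Qed.

Theorem mainTheorem1 (R : realType) (k l1 l2 : nat)
  (P : forall n, asg k n -> R)
  (phi : forall n, 'I_(l1 + l2) -> 'I_k * 'I_n -> R)
  (F : forall n, 'rV[R]_(l1 + l2) -> 'rV[R]_k) :
  (0 < l1)%N ->
  (forall n, is_design (P n)) ->
  (forall n (a : 'I_k) (i : 'I_n), 0 < aprob (P n) a i < 1) ->
  (exists (N : nat) (C eps : R), 0 < C /\ 0 < eps /\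
     forall n, (N <= n)%N -> forall v : 'rV[R]_(l1 + l2),
       (forall s : 'I_(l1 + l2), (l1 <= s)%N -> v 0 s = mvec (phi n) 0 s) ->
       \sum_(s : 'I_(l1 + l2) | (s < l1)%N) (v 0 s - mvec (phi n) 0 s) ^+ 2 < eps ->
       rnorm (F n v - F n (mvec (phi n))) <=
         C * Num.sqrt (\sum_(s : 'I_(l1 + l2) | (s < l1)%N)
                          (v 0 s - mvec (phi n) 0 s) ^+ 2)) ->
  (exists C' : R, forall n (s : 'I_(l1 + l2)),
     n%:R^-1 * \sum_(p : 'I_k * 'I_n) phi n s p ^+ 2 <= C') ->
  (fun n => specnorm (Dmat (P n)) / n%:R) @ \oo --> (0 : R) ->
  bigOp P
    (fun n z => rnorm (F n (@mhatvec R k l1 l2 n (P n) (phi n) z) - F n (mvec (phi n))))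
    (fun n => Num.sqrt (specnorm (Dmat (P n)) / n%:R)).
Proof.
move=> l1p hD hpi [N [C [epsL [Cp [ep hL]]]]] [C' hC'] hlim eps epsp.
have s0lt : (0 < l1 + l2)%N by apply: leq_trans l1p (leq_addr l2 l1).
have C'0 : 0 <= C'.
  by have := hC' 0%N (Ordinal s0lt); rewrite invr0 mul0r.
pose L : R := (l1 + l2)%:R.
have L0 : 0 <= L by apply: ler0n.
pose Q : R := L * C' * C ^+ 2 / eps.
have Q0 : 0 <= Q.
  by apply: divr_ge0 (ltW epsp); apply: mulr_ge0; [apply: mulr_ge0|apply: sqr_ge0].
pose M : R := Num.sqrt Q + 1.
have Mp : 0 < M by rewrite /M; apply: ltr_wpDl (sqrtr_ge0 _) _.
have M2 : Q < M ^+ 2.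
  have : Num.sqrt Q ^+ 2 = Q by rewrite sqr_sqrtr.
  have := sqrtr_ge0 Q; rewrite /M; nra.
pose K : R := L * C' * C ^+ 2 / M ^+ 2.
have K0 : 0 <= K.
  apply: divr_ge0; last exact: sqr_ge0.
  by apply: mulr_ge0; [apply: mulr_ge0|apply: sqr_ge0].
have Keps : K < eps.
  rewrite /K ltr_pdivrMr; last exact: exprn_gt0.
  have : L * C' * C ^+ 2 = eps * Q by rewrite /Q; field; apply: lt0r_neq0.
  by move=> ->; rewrite ltr_pM2l.
have hz : 0 < epsL * C ^+ 2 / M ^+ 2.
  by apply: divr_gt0; [apply: mulr_gt0 => //; exact: exprn_gt0 | exact: exprn_gt0].
have [N1 _ hN1] := cvgr_lt _ hlim _ hz.
exists M, (maxn (maxn N N1) 1).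
move=> n; rewrite !geq_max => /andP [/andP [nN nN1] n1].
set a := specnorm (Dmat (P n)) / n%:R.
have a0 : 0 <= a by apply: divr_ge0; [apply: specnorm_ge0 | apply: ler0n].
have aeps : M ^+ 2 / C ^+ 2 * a < epsL.
  have := hN1 n nN1; rewrite /= -/a => h.
  rewrite mulrAC ltr_pdivrMr; last exact: exprn_gt0.
  move: h; rewrite ltr_pdivlMr; last exact: exprn_gt0.
  by rewrite mulrC.
pose Y z := \sum_(s : 'I_(l1 + l2) | (s < l1)%N)
   (@mhatvec R k l1 l2 n (P n) (phi n) z 0 s - mvec (phi n) 0 s) ^+ 2.
have Y0 : forall z, 0 <= Y z by move=> z; apply: sumr_ge0 => s _; apply: sqr_ge0.
pose c := M ^+ 2 / C ^+ 2 * a.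
have c0 : 0 <= c.
  by apply: mulr_ge0 => //; apply: divr_ge0; apply: sqr_ge0.
apply: le_lt_trans Keps.
apply: le_trans (@markov R k n (P n) Y c K (hD n) Y0 c0 K0 _).
  apply: Pr_mono; first by case: (hD n).
  move=> z /= hX.
  have [Ylt|Yge] := ltP (Y z) epsL; last exact: lt_le_trans aeps Yge.
  have hl := hL n nN (@mhatvec R k l1 l2 n (P n) (phi n) z) _ Ylt.
  have {hl} hl : rnorm (F n (@mhatvec R k l1 l2 n (P n) (phi n) z) - F n (mvec (phi n)))
      <= C * Num.sqrt (Y z).
    apply: hl => s hs; rewrite !mxE.
    by rewrite ltnNge hs.
  have h1 := lt_le_trans hX hl.
  have sa2 : Num.sqrt a ^+ 2 = a by rewrite sqr_sqrtr.
  have sy2 : Num.sqrt (Y z) ^+ 2 = Y z by rewrite sqr_sqrtr.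
  have sa0 := sqrtr_ge0 a; have sy0 := sqrtr_ge0 (Y z).
  have hMa : 0 <= M * Num.sqrt a by apply: mulr_ge0 => //; apply: ltW.
  rewrite /c mulrAC ltr_pdivrMr; last exact: exprn_gt0.
  rewrite -sa2 -sy2; nra.
have hpos : forall (a0 : 'I_k) (i : 'I_n), 0 < aprob (P n) a0 i.
  by move=> a1 i; case/andP: (hpi n a1 i).
have -> : K * c = L * (C' * a).
  rewrite /K /c; field.
  by rewrite !lt0r_neq0.
rewrite /Y Ex_sum.
apply: (@le_trans _ _ (\sum_(s : 'I_(l1 + l2) | (s < l1)%N) (C' * a))).
  apply: ler_sum => s hs.
  have -> : (fun z => (@mhatvec R k l1 l2 n (P n) (phi n) z 0 s - mvec (phi n) 0 s) ^+ 2)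
      = (fun z => (mhat (P n) (phi n s) z - mbar (phi n s)) ^+ 2).
    by apply: funext => z; rewrite !mxE hs.
  rewrite (@Ex_sq R k n (P n) (hD n) hpos).
  apply: (@le_trans _ _ (n%:R^-1 ^+ 2 * (specnorm (Dmat (P n)) * \sum_t phi n s t ^+ 2))).
    apply: ler_wpM2l; first by apply: exprn_ge0; rewrite invr_ge0; apply: ler0n.
    exact: (@quad R _ (Dmat (P n)) (phi n s)).
  have -> : n%:R^-1 ^+ 2 * (specnorm (Dmat (P n)) * \sum_t phi n s t ^+ 2)
       = a * (n%:R^-1 * \sum_t phi n s t ^+ 2) by rewrite /a; ring.
  by rewrite [C' * a]mulrC; apply: ler_wpM2l => //; apply: hC'.
apply: (@le_trans _ _ (\sum_(s : 'I_(l1 + l2)) (C' * a))).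
  rewrite [X in _ <= X](bigID (fun s : 'I_(l1 + l2) => (s < l1)%N)) /= lerDl.
  by apply: sumr_ge0 => s _; apply: mulr_ge0.
by rewrite sumr_const card_ord -mulr_natl.
Qed.
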